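(* Let $k,\ell \in \mathbb{N}$, and let $G$ be any ordered graph. If $G$ contains no $k$-structure of Type 1, no $k$-structure of Type 2, and no $(k,\ell)$-structure of Type 3, then the vertices of $G$ may be partitioned into blocks $B_1 < \ldots < B_m$ of consecutive vertices, with $m \leqslant 256k^4$ and each block $\ell$-homogeneous.
   Context: An ordered graph of order $n$ has vertex set $[n]$ with the natural order; $\Gamma(x)$ is the neighbourhood of $x$. For sets $A,B$ of vertices, $A<B$ means $a<b$ for all $a\in A$, $b\in B$. For a vertex $x$ and $\ell\in\mathbb{N}$, $N_\ell(x)=\{z\in\mathbb{N}: x-\ell+1\leqslant z\leqslant x+\ell-1\}$. Vertices $x,y$ are $\ell$-homogeneous if $\Gamma(x)\setminus(N_\ell(x)\cup N_\ell(y))=\Gamma(y)\setminus(N_\ell(x)\cup N_\ell(y))$; a set $B$ of consecutive vertices is $\ell$-homogeneous if every two of its vertices are $\ell$-homogeneous. Structures in $G$: a $k$-structure of Type 1 consists of vertices $y$ and $x_1<\dots<x_{2k}$ with $y<x_1$ or $y>x_{2k}$, such that for $1\leqslant i<2k$, $yx_i\in E(G)$ iff $yx_{i+1}\notin E(G)$. A $k$-structure of Type 2(a) consists of vertices $x_1<\dots<x_{2k}<y_1<\dots<y_{2k}$ such that for $1\leqslant i<2k$, $x_iy_i\in E(G)$ iff $x_{i+1}y_{i+1}\notin E(G)$; Type 2(b) is the same but with $x_1<\dots<x_{2k}<y_{2k}<\dots<y_1$; a $k$-structure of Type 2 is one of Type 2(a) or 2(b). A $(k,\ell)$-structure of Type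 3 consists of vertices $x_1<z_{1,1}<\dots<z_{1,\ell-1}<y_1<x_2<z_{2,1}<\dots<z_{2,\ell-1}<y_2<x_3<\dots<y_{2k-1}<x_{2k}<z_{2k,1}<\dots<z_{2k,\ell-1}<y_{2k}$ such that for $1\leqslant i<2k$, $x_iy_i\in E(G)$ iff $x_{i+1}y_{i+1}\notin E(G)$. *)

(* Defs.v *)
From mathcomp Require Import all_boot.
Set Implicit Arguments. Unset Strict Implicit. Unset Printing Implicit Defensive.

(* An ordered graph of order n: vertex set [n] = {1,...,n} (as nats) with the
   natural order, and a symmetric irreflexive adjacency relation [adj]
   (values of [adj] outside [n] are irrelevant). *)
Definition is_vertex (n v : nat) : bool := (1 <= v) && (v <= n).

Definition simple_graph (adj : rel nat) : Prop :=
  (forall u v, adj u v = adj v u) /\ (forall v, adj v v = false).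

(* z \in N_l(x)  <->  x - l + 1 <= z <= x + l - 1  (over the integers) *)
Definition in_Nl (l x z : nat) : bool := (z - x < l) && (x - z < l).

Definition homog (n : nat) (adj : rel nat) (l x y : nat) : Prop :=
  forall z, is_vertex n z -> ~~ in_Nl l x z -> ~~ in_Nl l y z ->
    adj x z = adj y z.

Definition incr_verts (n len : nat) (x : nat -> nat) : Prop :=
  (forall i, i < len -> is_vertex n (x i)) /\
  (forall i, i.+1 < len -> x i < x i.+1).

(* k-structure of Type 1 (indices shifted: x_1..x_{2k} are x 0 .. x (2k-1)) *)
Definition type1 (n : nat) (adj : rel nat) (k : nat) : Prop :=
  exists (y : nat) (x : nat -> nat),
    is_vertex n y /\ incr_verts n (2 * k) x /\
    (y < x 0 \/ y > x (2 * k).-1) /\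
    (forall i, i.+1 < 2 * k -> adj y (x i) = ~~ adj y (x i.+1)).

Definition type2a (n : nat) (adj : rel nat) (k : nat) : Prop :=
  exists x y : nat -> nat,
    incr_verts n (2 * k) x /\ incr_verts n (2 * k) y /\
    x (2 * k).-1 < y 0 /\
    (forall i, i.+1 < 2 * k -> adj (x i) (y i) = ~~ adj (x i.+1) (y i.+1)).

Definition type2b (n : nat) (adj : rel nat) (k : nat) : Prop :=
  exists x y : nat -> nat,
    incr_verts n (2 * k) x /\
    (forall i, i < 2 * k -> is_vertex n (y i)) /\
    (forall i, i.+1 < 2 * k -> y i.+1 < y i) /\
    x (2 * k).-1 < y (2 * k).-1 /\
    (forall i, i.+1 < 2 * k -> adj (x i) (y i) = ~~ adj (x i.+1) (y i.+1)).

Definition type2 (n : nat) (adj : rel nat) (k : nat) : Prop :=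
  type2a n adj k \/ type2b n adj k.

(* (k,l)-structure of Type 3:
   x_1 < z_{1,1} < ... < z_{1,l-1} < y_1 < x_2 < ... < x_{2k} < z_{2k,1} < ... < z_{2k,l-1} < y_{2k}
   (indices shifted to start at 0). *)
Definition type3 (n : nat) (adj : rel nat) (k l : nat) : Prop :=
  exists (x y : nat -> nat) (z : nat -> nat -> nat),
    (forall i, i < 2 * k -> is_vertex n (x i) /\ is_vertex n (y i) /\ x i < y i) /\
    (forall i, i.+1 < 2 * k -> y i < x i.+1) /\
    (forall i j, i < 2 * k -> j < l.-1 ->
        is_vertex n (z i j) /\ x i < z i j /\ z i j < y i) /\
    (forall i j, i < 2 * k -> j.+1 < l.-1 -> z i j < z i j.+1) /\
    (forall i, i.+1 < 2 * k -> adj (x i) (y i) = ~~ adj (x i.+1) (y i.+1)).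

(* A partition of [n] into m blocks B_1 < ... < B_m of consecutive vertices,
   given by cut points 1 = b 0 < b 1 < ... < b m = n+1, B_{j+1} = [b j, b (j+1)),
   each block being l-homogeneous. *)
Definition homog_block_partition (n : nat) (adj : rel nat) (l m : nat)
    (b : nat -> nat) : Prop :=
  b 0 = 1 /\ b m = n.+1 /\
  (forall j, j < m -> b j < b j.+1) /\
  (forall j, j < m -> forall x y, b j <= x < b j.+1 -> b j <= y < b j.+1 ->
      homog n adj l x y).

(* Main.v *)
Require Import Defs.
From mathcomp Require Import all_boot.
From mathcomp Require Import zify.
Set Implicit Arguments. Unset Strict Implicit. Unset Printing Implicit Defensive.

Section Ht.
Variable r : rel nat.

Fixpoint htl (m : nat) : seq nat :=
  if m is m'.+1 then
    let l := htl m' in rcons l (\max_(j < m' | r j m') nth 0 l j).+1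
  else [::].

Definition ht i := nth 0 (htl i.+1) i.

Lemma size_htl m : size (htl m) = m.
Proof. by elim: m => //= m IH; rewrite size_rcons IH. Qed.

Lemma nth_htl m j : j < m -> nth 0 (htl m) j = ht j.
Proof.
elim: m => // m IH; rewrite ltnS leq_eqVlt => /orP[/eqP ->|ltjm] //.
by rewrite /= nth_rcons size_htl ltjm IH.
Qed.

Lemma htE i : ht i = (\max_(j < i | r j i) ht j).+1.
Proof.
rewrite /ht /= nth_rcons size_htl ltnn eqxx; congr (_.+1).
by apply: eq_bigr => j _; rewrite nth_htl.
Qed.

Lemma ht_gt0 i : 0 < ht i.
Proof. by rewrite htE. Qed.

Lemma ht_lt j i : j < i -> r j i -> ht j < ht i.
Proof.
move=> lt rji; rewrite (htE i) ltnS.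
exact: (@leq_bigmax_cond _ (fun j : 'I_i => r j i) (fun j : 'I_i => ht j) (Ordinal lt)).
Qed.

Lemma ht_chain m : forall i, m.+1 <= ht i -> exists f : nat -> nat,
  f m = i /\ forall t, t < m -> f t < f t.+1 /\ r (f t) (f t.+1).
Proof.
elim: m => [|m IH] i hi.
  by exists (fun _ => i); split.
move: hi; rewrite htE ltnS.
have [c0|] := posnP #|(fun j : 'I_i => r j i)|.
  rewrite big_pred0 //= => j; apply/negP => Hj.
  by move: c0 => /eqP; apply/negP; rewrite -lt0n; apply/card_gt0P; exists j.
move=> /(eq_bigmax_cond (fun j : 'I_i => ht j)) [j0 Hj0 ->] hj0.
have [f [fm Hf]] := IH _ hj0.
exists (fun t => if t == m.+1 then i else f t); split; first by rewrite eqxx.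
move=> t lt; rewrite (_ : (t == m.+1) = false); last by apply/eqP => E; lia.
case: (eqVneq t m) => [->|ne].
  rewrite eqxx fm; split; [exact: ltn_ord | exact: Hj0].
rewrite (_ : (t.+1 == m.+1) = false); last by apply/eqP => E; lia.
by apply: Hf; lia.
Qed.

End Ht.

Lemma chain_lt (f : nat -> nat) M :
  (forall t, t < M -> f t < f t.+1) -> forall t u, t < u <= M -> f t < f u.
Proof.
move=> H t; elim=> [|u IH] //; rewrite ltnS => /andP[tu uM].
case: (eqVneq t u) => [->|ne]; first by apply: H.
apply: (ltn_trans (IH _)); first by lia.
by apply: H.
Qed.

Lemma chain_eq (g : nat -> nat) M :
  (forall t, t < M -> g t = g t.+1) -> forall t, t <= M -> g t = g 0.
Proof. by move=> H; elim=> // t IH tM; rewrite -H ?IH //; lia. Qed.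

Section Core.
Variables (s : seq nat) (M : nat) (D : rel nat) (c : nat -> nat).
Hypothesis Us : uniq s.
Hypothesis hyp1 : forall f : nat -> nat, (forall t, t <= M.*2 -> f t \in s) ->
  (forall t, t < M.*2 -> f t < f t.+1 /\ D (f t) (f t.+1)) -> False.
Hypothesis hyp2 : forall f : nat -> nat, (forall t, t <= M -> f t \in s) ->
  (forall t, t < M -> f t < f t.+1) ->
  (forall t u, t < u <= M -> ~~ D (f t) (f u)) ->
  ((forall t, t < M -> c (f t) < c (f t.+1)) \/
   (forall t, t < M -> c (f t.+1) < c (f t)) \/
   (forall t, t < M -> c (f t) = c (f t.+1))) -> False.

Let rH j i := [&& j \in s, i \in s & D j i].
Let h := ht rH.
Let rI j i := [&& j \in s, i \in s, h j == h i & c j < c i].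
Let rDc j i := [&& j \in s, i \in s, h j == h i & c i < c j].
Let rE j i := [&& j \in s, i \in s, h j == h i & c j == c i].

Lemma h_bound i : i \in s -> h i <= M.*2.
Proof.
move=> si; rewrite leqNgt; apply/negP => /ht_chain [f [fm Hf]].
apply: (hyp1 (f := f)).
  move=> t; rewrite leq_eqVlt => /orP[/eqP ->|lt]; first by rewrite fm.
  by have [_ /and3P[]] := Hf _ lt.
by move=> t lt; have [? /and3P[]] := Hf _ lt.
Qed.

Lemma level_bound (r : rel nat) i :
  (forall j i, r j i -> [/\ j \in s, i \in s & h j == h i]) ->
  (forall f : nat -> nat, (forall t, t < M -> f t < f t.+1 /\ r (f t) (f t.+1)) ->
     (forall t, t <= M -> f t \in s) ->
     (forall t u, t < u <= M -> ~~ D (f t) (f u)) -> False) ->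
  i \in s -> ht r i <= M.
Proof.
move=> Hr Hno si; rewrite leqNgt; apply/negP => /ht_chain [f [fm Hf]].
have fs : forall t, t <= M -> f t \in s.
  move=> t; rewrite leq_eqVlt => /orP[/eqP ->|lt]; first by rewrite fm.
  by have [_ /Hr[]] := Hf _ lt.
apply: (Hno f Hf fs).
have hlev : forall t, t <= M -> h (f t) = h (f 0).
  apply: chain_eq => t lt; have [_ /Hr[_ _ /eqP]] := Hf _ lt; done.
move=> t u tu; apply/negP => Dtu.
have ltf : f t < f u by apply: (chain_lt (M := M)) => // t' /Hf[].
have := @ht_lt rH _ _ ltf; rewrite /rH fs ?Dtu; last by lia.
rewrite fs; last by lia.
rewrite /= -/h hlev ?(hlev u) ?ltnn; [by move=> /(_ isT) | by lia | by lia].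
Qed.

Definition lab i := (h i, (ht rI i, (ht rDc i, ht rE i))).

Lemma lab_neq j i : j < i -> j \in s -> i \in s -> lab j != lab i.
Proof.
move=> ji sj si; rewrite /lab.
case Dji: (D j i).
  have := @ht_lt rH _ _ ji; rewrite /rH sj si Dji => /(_ isT) lt.
  by apply/eqP => [[E]]; move: lt; rewrite -/h E ltnn.
case: (eqVneq (h j) (h i)) => [hE|hne]; last by apply/eqP => [[E]]; rewrite E eqxx in hne.
case: (ltngtP (c j) (c i)) => cc.
- have := @ht_lt rI _ _ ji; rewrite /rI sj si hE eqxx cc => /(_ isT) lt.
  by apply/eqP => /(congr1 (fun p => p.2.1)) /= E; move: lt; rewrite E ltnn.
- have := @ht_lt rDc _ _ ji; rewrite /rDc sj si hE eqxx cc => /(_ isT) lt.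
  by apply/eqP => /(congr1 (fun p => p.2.2.1)) /= E; move: lt; rewrite E ltnn.
- have := @ht_lt rE _ _ ji; rewrite /rE sj si hE eqxx cc eqxx => /(_ isT) lt.
  by apply/eqP => /(congr1 (fun p => p.2.2.2)) /= E; move: lt; rewrite E ltnn.
Qed.

Lemma core_bound : size s <= M.*2 * (M * (M * M)).
Proof.
have inj : {in s &, injective lab}.
  move=> i j si sj E; case: (ltngtP i j) => // lt.
  - by move: (lab_neq lt si sj); rewrite E eqxx.
  - by move: (lab_neq lt sj si); rewrite E eqxx.
have Us2 : uniq (map lab s) by rewrite (map_inj_in_uniq inj).
set R3 := [seq (x, y) | x <- iota 1 M, y <- iota 1 M].
set R2 := [seq (x, y) | x <- iota 1 M, y <- R3].
set R1 := [seq (x, y) | x <- iota 1 M.*2, y <- R2].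
have -> : M.*2 * (M * (M * M)) = size R1 by rewrite !size_allpairs !size_iota.
rewrite -(size_map lab); apply: uniq_leq_size => // _ /mapP[i si ->].
have lev : forall (r : rel nat), (forall j i, r j i -> [/\ j \in s, i \in s & h j == h i]) ->
   (forall j i, r j i -> (c j < c i) \/ (c i < c j) \/ (c j = c i)) -> True by [].
have bI : ht rI i <= M.
  apply: level_bound => //.
    by move=> j i' /and4P[]. 
  move=> f Hf fs nD; apply: (hyp2 fs) => //; first by move=> t /Hf[].
  by left => t /Hf[_ /and4P[]].
have bD : ht rDc i <= M.
  apply: level_bound => //.
    by move=> j i' /and4P[]. 
  move=> f Hf fs nD; apply: (hyp2 fs) => //; first by move=> t /Hf[].
  by right; left => t /Hf[_ /and4P[]].
have bE : ht rE i <= M.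
  apply: level_bound => //.
    by move=> j i' /and4P[]. 
  move=> f Hf fs nD; apply: (hyp2 fs) => //; first by move=> t /Hf[].
  by right; right => t /Hf[_ /and4P[_ _ _ /eqP]].
have bH := h_bound si.
have g1 : 0 < h i := @ht_gt0 rH i; have g2 := @ht_gt0 rI i; have g3 := @ht_gt0 rDc i; have g4 := @ht_gt0 rE i.
rewrite /lab; apply: allpairs_f; first by rewrite mem_iota; lia.
apply: allpairs_f; first by rewrite mem_iota; lia.
by apply: allpairs_f; rewrite mem_iota; lia.
Qed.

End Core.

Section Main.
Variables (k l n : nat) (adj : rel nat).
Hypothesis k1 : 1 <= k.
Hypothesis l1 : 1 <= l.
Hypothesis sg : simple_graph adj.
Hypothesis no1 : ~ type1 n adj k.
Hypothesis no2 : ~ type2 n adj k.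
Hypothesis no3 : ~ type3 n adj k l.

Let M := (2 * k).-1.
Lemma M1 : 0 < M. Proof. rewrite /M; lia. Qed.
Lemma KM : 2 * k = M.+1. Proof. rewrite /M; lia. Qed.

Lemma sym u v : adj u v = adj v u. Proof. by case: sg. Qed.

Definition pick z p (b : bool) := if adj z p == b then p else p.+1.
Lemma pick_adj z p b : adj z p != adj z p.+1 -> adj z (pick z p b) = b.
Proof. rewrite /pick; case E1: (adj z p); case E2: (adj z p.+1); case: b => //=; rewrite ?E1 ?E2 //. Qed.
Lemma pick_ge z p b : p <= pick z p b. Proof. by rewrite /pick; case: ifP. Qed.
Lemma pick_le z p b : pick z p b <= p.+1. Proof. by rewrite /pick; case: ifP. Qed.

Lemma odd_alt i : odd i = ~~ odd i.+1.
Proof. by rewrite /= negbK. Qed.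

Definition Rw p z := (p.+1 + l <= z) && (adj z p != adj z p.+1).
Definition Rp p := [&& 0 < p, p < n & has (Rw p) (iota 1 n)].
Definition wR p := nth 0 (iota 1 n) (find (Rw p) (iota 1 n)).

Lemma wR_spec p : Rp p -> [/\ 0 < p, p < n, 1 <= wR p <= n, p.+1 + l <= wR p
   & adj (wR p) p != adj (wR p) p.+1].
Proof.
case/and3P => p0 pn hs.
have := nth_find 0 hs; rewrite -/(wR p) => /andP[h1 h2].
have : wR p \in iota 1 n by apply: mem_nth; rewrite -has_find.
by rewrite mem_iota => hm; split => //; lia.
Qed.

Section RCount.
Variable par : bool.
Let s := [seq p <- iota 0 n.+1 | Rp p && (odd p == par)].

Lemma s_mem p : p \in s -> Rp p /\ odd p = par.
Proof. by rewrite mem_filter => /andP[/andP[? /eqP]]. Qed.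

Lemma gap2 (f : nat -> nat) t : f t \in s -> f t.+1 \in s -> f t < f t.+1 -> (f t).+2 <= f t.+1.
Proof. by move=> /s_mem[_ o1] /s_mem[_ o2] lt; lia. Qed.

Lemma R_count : size s <= M.*2 * (M * (M * M)).
Proof.
apply: (@core_bound s M (fun p q => wR p <= q.+1) wR).
- by rewrite filter_uniq // iota_uniq.
- move=> f fs fc; apply: no3.
  pose x t := pick (wR (f t.*2)) (f t.*2) (odd t).
  exists x, (fun t => wR (f t.*2)), (fun t j => x t + j.+1).
  have F : forall t, t <= M -> [/\ 0 < f t.*2, f t.*2 < n, 1 <= wR (f t.*2) <= n,
     (f t.*2).+1 + l <= wR (f t.*2) & adj (wR (f t.*2)) (f t.*2) != adj (wR (f t.*2)) (f t.*2).+1].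
    move=> t tM; apply: wR_spec; have [] // := s_mem (fs t.*2 ltac:(lia)).
  have X : forall t, t <= M -> f t.*2 <= x t <= (f t.*2).+1.
    by move=> t tM; rewrite /x pick_ge pick_le.
  rewrite KM; split; [|split; [|split; [|split]]].
  + move=> i; rewrite ltnS => iM; have := F _ iM; have := X _ iM; move=> ? [] *.
    rewrite /is_vertex; split; [|split]; lia.
  + move=> i; rewrite ltnS => iM.
    have iM' : i <= M by lia.
    have := F _ iM'; have := X _ iM'; have := X _ iM; rewrite doubleS; move=> ? ? [] *.
    have [_ dd] := fc (i.*2) ltac:(lia).
    have [lt1 _] := fc (i.*2).+1 ltac:(lia).
    have g := @gap2 f (i.*2).+1 (fs (i.*2).+1 ltac:(lia)) (fs (i.*2).+2 ltac:(lia)) lt1.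
    lia.
  + move=> i j; rewrite ltnS => iM jl.
    have := F _ iM; have := X _ iM; move=> ? [] *; rewrite /is_vertex; split; [|split]; lia.
  + move=> i j iM jl; lia.
  + move=> i; rewrite ltnS => iM.
    have iM' : i <= M by lia.
    have [_ _ _ _ a1] := F _ iM'; have [_ _ _ _ a2] := F _ iM.
    by rewrite !(sym (x _)) /x !pick_adj // odd_alt.
- move=> f fs finc nD cases.
  have F : forall t, t <= M -> [/\ 0 < f t, f t < n, 1 <= wR (f t) <= n,
     (f t).+1 + l <= wR (f t) & adj (wR (f t)) (f t) != adj (wR (f t)) (f t).+1].
    by move=> t tM; apply: wR_spec; have [] := s_mem (fs t tM).
  pose x t := pick (wR (f t)) (f t) (odd t).
  have X : forall t, t <= M -> f t <= x t <= (f t).+1.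
    by move=> t tM; rewrite /x pick_ge pick_le.
  have xinc : forall i, i.+1 < 2 * k -> x i < x i.+1.
    rewrite KM => i; rewrite ltnS => iM.
    have := X _ iM; have := X i ltac:(lia) => ? ?.
    have g := @gap2 f i (fs i ltac:(lia)) (fs i.+1 iM) (finc i iM); lia.
  have xv : forall i, i < 2 * k -> is_vertex n (x i).
    rewrite KM => i; rewrite ltnS => iM.
    have := F _ iM; have := X _ iM; move=> ? [] *; rewrite /is_vertex; lia.
  have yv : forall i, i < 2 * k -> is_vertex n (wR (f i)).
    rewrite KM => i; rewrite ltnS => iM.
    by have [] := F _ iM; rewrite /is_vertex.
  have alt : forall i, i.+1 < 2 * k -> adj (x i) (wR (f i)) = ~~ adj (x i.+1) (wR (f i.+1)).
    rewrite KM => i; rewrite ltnS => iM.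
    have [_ _ _ _ a1] := F i ltac:(lia); have [_ _ _ _ a2] := F _ iM.
    by rewrite !(sym (x _)) /x !pick_adj // odd_alt.
  have nd := nD 0 M ltac:(have := M1; lia).
  have FM := F M (leqnn _); have XM := X M (leqnn _).
  case: cases => [ci|[cd|ce]].
  + apply: no2; left; exists x, (fun t => wR (f t)).
    split; first by split.
    split; first by split => // i; rewrite KM ltnS => /ci.
    split; last exact: alt.
    rewrite KM /=; lia.
  + apply: no2; right; exists x, (fun t => wR (f t)).
    split; first by split.
    split; first exact: yv.
    split; first by move=> i; rewrite KM ltnS => /cd.
    split; last exact: alt.
    rewrite KM /=; case: FM => *; lia.
  + apply: no1; exists (wR (f 0)), x.
    have ceq : forall t, t <= M -> wR (f t) = wR (f 0) by apply: chain_eq.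
    split; first exact: (yv 0 ltac:(rewrite KM //)).
    split; first by split.
    split; first by right; rewrite KM /= -(ceq M) //; case: FM => *; lia.
    rewrite KM => i; rewrite ltnS => iM.
    have [_ _ _ _ a1] := F i ltac:(lia); have [_ _ _ _ a2] := F _ iM.
    rewrite /x (ceq i) ?(ltnW iM) // (ceq i.+1) // in a1 a2 *.
    by rewrite !pick_adj // odd_alt.
Qed.
End RCount.


Definition Lw p z := (z + l <= p) && (adj z p != adj z p.+1).
Definition Lp p := [&& 0 < p, p < n & has (Lw p) (iota 1 n)].
Definition wL p := nth 0 (iota 1 n) (find (Lw p) (iota 1 n)).

Lemma wL_spec p : Lp p -> [/\ 0 < p, p < n, 1 <= wL p <= n, wL p + l <= p
   & adj (wL p) p != adj (wL p) p.+1].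
Proof.
case/and3P => p0 pn hs.
have := nth_find 0 hs; rewrite -/(wL p) => /andP[h1 h2].
have : wL p \in iota 1 n by apply: mem_nth; rewrite -has_find.
by rewrite mem_iota => hm; split => //; lia.
Qed.

Section LCount.
Variable par : bool.
Let s := [seq p <- iota 0 n.+1 | Lp p && (odd p == par)].

Lemma sL_mem p : p \in s -> Lp p /\ odd p = par.
Proof. by rewrite mem_filter => /andP[/andP[? /eqP]]. Qed.

Lemma gap2L (f : nat -> nat) t : f t \in s -> f t.+1 \in s -> f t < f t.+1 -> (f t).+2 <= f t.+1.
Proof. by move=> /sL_mem[_ o1] /sL_mem[_ o2] lt; lia. Qed.

Lemma L_count : size s <= M.*2 * (M * (M * M)).
Proof.
apply: (@core_bound s M (fun p q => p <= wL q) wL).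
- by rewrite filter_uniq // iota_uniq.
- move=> f fs fc; apply: no3.
  pose y t := pick (wL (f t.*2)) (f t.*2) (odd t).
  exists (fun t => wL (f t.*2)), y, (fun t j => wL (f t.*2) + j.+1).
  have F : forall t, t <= M -> [/\ 0 < f t.*2, f t.*2 < n, 1 <= wL (f t.*2) <= n,
     wL (f t.*2) + l <= f t.*2 & adj (wL (f t.*2)) (f t.*2) != adj (wL (f t.*2)) (f t.*2).+1].
    move=> t tM; apply: wL_spec; have [] // := sL_mem (fs t.*2 ltac:(lia)).
  have Y : forall t, t <= M -> f t.*2 <= y t <= (f t.*2).+1.
    by move=> t tM; rewrite /y pick_ge pick_le.
  rewrite KM; split; [|split; [|split; [|split]]].
  + move=> i; rewrite ltnS => iM; have := F _ iM; have := Y _ iM; move=> ? [] *.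
    rewrite /is_vertex; split; [|split]; lia.
  + move=> i; rewrite ltnS => iM.
    have iM' : i <= M by lia.
    have := F _ iM'; have := Y _ iM'; move=> ? [] *.
    have [lt0 _] := fc (i.*2) ltac:(lia).
    have [_ dd] := fc (i.*2).+1 ltac:(lia).
    have g := @gap2L f (i.*2) (fs (i.*2) ltac:(lia)) (fs (i.*2).+1 ltac:(lia)) lt0.
    rewrite doubleS; lia.
  + move=> i j; rewrite ltnS => iM jl.
    have := F _ iM; have := Y _ iM; move=> ? [] *; rewrite /is_vertex; split; [|split]; lia.
  + move=> i j iM jl; lia.
  + move=> i; rewrite ltnS => iM.
    have iM' : i <= M by lia.
    have [_ _ _ _ a1] := F _ iM'; have [_ _ _ _ a2] := F _ iM.
    by rewrite /y !pick_adj // odd_alt.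
- move=> f fs finc nD cases.
  have F : forall t, t <= M -> [/\ 0 < f t, f t < n, 1 <= wL (f t) <= n,
     wL (f t) + l <= f t & adj (wL (f t)) (f t) != adj (wL (f t)) (f t).+1].
    by move=> t tM; apply: wL_spec; have [] := sL_mem (fs t tM).
  have nd := nD 0 M ltac:(have := M1; lia).
  have F0 := F 0 (leq0n _); have FM := F M (leqnn _).
  case: cases => [ci|[cd|ce]].
  + apply: no2; left.
    pose y t := pick (wL (f t)) (f t) (odd t).
    have Y : forall t, t <= M -> f t <= y t <= (f t).+1.
      by move=> t tM; rewrite /y pick_ge pick_le.
    exists (fun t => wL (f t)), y; rewrite KM.
    split; first split.
      by move=> i; rewrite ltnS => iM; have [] := F _ iM; rewrite /is_vertex.
      by move=> i; rewrite ltnS => /ci.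
    split; first split.
      move=> i; rewrite ltnS => iM; have := F _ iM; have := Y _ iM; move=> ? [] *.
      rewrite /is_vertex; lia.
      move=> i; rewrite ltnS => iM; have := Y _ iM; have := Y i ltac:(lia) => ? ?.
      have g := @gap2L f i (fs i ltac:(lia)) (fs i.+1 iM) (finc i iM); lia.
    split.
      have := Y 0 (leq0n _); rewrite /=; lia.
    move=> i; rewrite ltnS => iM.
    have [_ _ _ _ a1] := F i ltac:(lia); have [_ _ _ _ a2] := F _ iM.
    by rewrite /y !pick_adj // odd_alt.
  + apply: no2; right.
    pose y t := pick (wL (f (M - t))) (f (M - t)) (odd t).
    have Y : forall t, t <= M -> f (M - t) <= y t <= (f (M - t)).+1.
      by move=> t tM; rewrite /y pick_ge pick_le.
    have Ms : forall i, i < M -> M - i = (M - i.+1).+1 by move=> i iM; lia.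
    exists (fun t => wL (f (M - t))), y; rewrite KM.
    split; first split.
      move=> i; rewrite ltnS => iM; have [] := F (M - i) (leq_subr _ _); by rewrite /is_vertex.
      move=> i; rewrite ltnS => iM; rewrite (Ms _ iM); apply: cd; lia.
    split.
      move=> i; rewrite ltnS => iM; have := F (M - i) (leq_subr _ _); have := Y _ iM; move=> ? [] *.
      rewrite /is_vertex; lia.
    split.
      move=> i; rewrite ltnS => iM; have := Y _ iM; have := Y i ltac:(lia); rewrite (Ms _ iM) => ? ?.
      have g := @gap2L f (M - i.+1) (fs _ (leq_subr _ _)) (fs (M - i.+1).+1 ltac:(lia)) (finc (M - i.+1) ltac:(lia)); lia.
    split.
      have := Y M (leqnn _); rewrite /= subnn; case: F0 => *; lia.
    move=> i; rewrite ltnS => iM.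
    have [_ _ _ _ a1] := F (M - i) (leq_subr _ _); have [_ _ _ _ a2] := F (M - i.+1) (leq_subr _ _).
    by rewrite /y !pick_adj // odd_alt.
  + apply: no1.
    have ceq : forall t, t <= M -> wL (f t) = wL (f 0) by apply: chain_eq.
    pose x t := pick (wL (f 0)) (f t) (odd t).
    have X : forall t, t <= M -> f t <= x t <= (f t).+1.
      by move=> t tM; rewrite /x pick_ge pick_le.
    exists (wL (f 0)), x; rewrite KM.
    split; first by case: F0 => *; rewrite /is_vertex.
    split; first split.
      move=> i; rewrite ltnS => iM; have := F _ iM; have := X _ iM; rewrite ceq // => ? [] *.
      rewrite /is_vertex; lia.
      move=> i; rewrite ltnS => iM; have := X _ iM; have := X i ltac:(lia) => ? ?.
      have g := @gap2L f i (fs i ltac:(lia)) (fs i.+1 iM) (finc i iM); lia.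
    split; first by left; have := X 0 (leq0n _); case: F0 => *; lia.
    move=> i; rewrite ltnS => iM.
    have [_ _ _ _ a1] := F i ltac:(lia); have [_ _ _ _ a2] := F _ iM.
    rewrite (ceq i) ?(ltnW iM) // (ceq i.+1) // in a1 a2.
    by rewrite /x !pick_adj // odd_alt.
Qed.
End LCount.


Definition Sp z := [&& l < z, z + l <= n & adj z (z - l) != adj z (z + l)].
Definition Qw c z := [&& Sp z, z - l < c & c <= z + l].
Definition Qc c := (l %| c) && has (Qw c) (iota 1 n).
Definition wQ c := nth 0 (iota 1 n) (find (Qw c) (iota 1 n)).

Lemma wQ_spec c : Qc c -> [/\ l %| c, l < wQ c, wQ c + l <= n,
   adj (wQ c) (wQ c - l) != adj (wQ c) (wQ c + l) & wQ c - l < c <= wQ c + l].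
Proof.
case/andP => dc hs.
have := nth_find 0 hs; rewrite -/(wQ c) => /and3P[/and3P[h1 h2 h3] h4 h5].
by split => //; apply/andP.
Qed.

Lemma dvd_gap a b : l %| a -> l %| b -> a < b -> a + l <= b.
Proof. move=> /dvdnP[a' ->] /dvdnP[b' ->]; rewrite ltn_pmul2r // => lt.
by rewrite -mulSnr leq_pmul2r. Qed.

Lemma Q_count : size [seq c <- iota 1 n.+1 | Qc c] <= 4 * M.
Proof.
set sQ := [seq c <- iota 1 n.+1 | Qc c].
rewrite leqNgt; apply/negP => big.
have srt : sorted ltn sQ by apply: sorted_filter => //; [exact: ltn_trans | exact: iota_ltn_sorted].
have inQ : forall i, i < size sQ -> Qc (nth 0 sQ i).
  by move=> i lt; have := mem_nth 0 lt; rewrite mem_filter => /andP[].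
have step : forall i, i.+1 < size sQ -> nth 0 sQ i + l <= nth 0 sQ i.+1.
  move=> i lt; apply: dvd_gap.
  - by case/andP: (inQ i (ltnW lt)).
  - by case/andP: (inQ i.+1 lt).
  - by apply: (sorted_ltn_nth ltn_trans) => //; rewrite inE; lia.
have step4 : forall t, t < M -> nth 0 sQ (4 * t) + 4 * l <= nth 0 sQ (4 * t.+1).
  move=> t tM.
  have := step (4 * t) ltac:(lia); have := step (4 * t).+1 ltac:(lia);
  have := step (4 * t).+2 ltac:(lia); have := step (4 * t).+3 ltac:(lia).
  rewrite (_ : 4 * t.+1 = (4 * t).+4); last lia.
  lia.
pose w t := wQ (nth 0 sQ (4 * t)).
have W : forall t, t <= M -> [/\ l < w t, w t + l <= n,
   adj (w t) (w t - l) != adj (w t) (w t + l),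
   w t - l < nth 0 sQ (4 * t) & nth 0 sQ (4 * t) <= w t + l].
  by move=> t tM; have [? ? ? ? /andP[]] := wQ_spec (inQ (4 * t) ltac:(lia)).
apply: no3.
pose b t := adj (w t) (w t - l) == odd t.
pose x t := if b t then w t - l else w t.
have xadj : forall t, t <= M -> adj (x t) (x t + l) = odd t.
  move=> t tM; have [h1 _ h3 _ _] := W t tM.
  rewrite /x; case bt: (b t); move: bt; rewrite /b.
    by move/eqP <-; rewrite subnK ?(ltnW h1) // sym.
  by move: h3; case: (adj (w t) (w t - l)); case: (adj (w t) (w t + l)); case: (odd t).
have X : forall t, t <= M -> w t - l <= x t <= w t.
  by move=> t tM; rewrite /x; case: (b t); lia.
have Xl : forall t, t <= M -> w t <= x t + l.
  by move=> t tM; have [h1 _ _ _ _] := W t tM; rewrite /x; case: (b t); lia.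
clearbody x; clearbody b; clearbody w.
exists x, (fun t => x t + l), (fun t j => x t + j.+1); rewrite KM.
split; [|split; [|split; [|split]]].
- move=> i; rewrite ltnS => iM; have [a1 a2 _ _ _] := W _ iM; have /andP[c1 c2] := X _ iM; have c3 := Xl _ iM.
  rewrite /is_vertex; clear -a1 a2 c1 c2 c3 l1; split; [|split]; lia.
- move=> i; rewrite ltnS => iM.
  have [a1 _ _ a4 a5] := W _ iM; have [b1 _ _ b4 b5] := W i (ltnW iM).
  have /andP[c1 c2] := X _ iM; have /andP[d1 d2] := X i (ltnW iM).
  have e := step4 _ iM.
  clear -a1 a4 a5 b1 b4 b5 c1 c2 d1 d2 e; lia.
- move=> i j; rewrite ltnS => iM jl.
  have [a1 a2 _ _ _] := W _ iM; have /andP[c1 c2] := X _ iM; have c3 := Xl _ iM.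
  rewrite /is_vertex; clear -a1 a2 c1 c2 c3 l1 jl; split; [|split]; lia.
- move=> i j iM jl; lia.
- move=> i; rewrite ltnS => iM.
  by rewrite xadj ?(ltnW iM) // xadj // odd_alt.
Qed.


Definition cut c := [&& 1 < c, c <= n & [|| Rp c.-1, Lp c.-1 | Qc c]].
Definition bs := [seq c <- iota 1 n.+1 | [|| c == 1, c == n.+1 | cut c]].

Lemma bs_sorted : sorted ltn bs.
Proof. by apply: sorted_filter; [exact: ltn_trans | exact: iota_ltn_sorted]. Qed.

Lemma bs_head : nth 0 bs 0 = 1.
Proof. by rewrite /bs /=. Qed.

Lemma bs_size : 0 < size bs.
Proof. by rewrite /bs /=. Qed.

Lemma bs_last : nth 0 bs (size bs).-1 = n.+1.
Proof.
rewrite nth_last /bs.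
have -> : iota 1 n.+1 = rcons (iota 1 n) n.+1 by rewrite -cats1 -(addn1 n) iotaD add1n addn1.
rewrite filter_rcons eqxx orbT.
by rewrite last_rcons.
Qed.

Lemma bs_range c : c \in bs -> 1 <= c <= n.+1.
Proof. by rewrite mem_filter mem_iota => /andP[_]; lia. Qed.

Lemma bs_nocut j c : j.+1 < size bs -> nth 0 bs j < c < nth 0 bs j.+1 -> ~~ cut c.
Proof.
move=> js /andP[h1 h2]; apply/negP => cc.
have : c \in bs.
  rewrite mem_filter cc !orbT andTb mem_iota.
  have : nth 0 bs j.+1 \in bs by apply: mem_nth.
  move/bs_range; lia.
case/(nthP 0) => i ilt ci.
have srt := bs_sorted.
case: (ltnP j i) => ji.
  have : nth 0 bs j.+1 <= nth 0 bs i.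
    case: (eqVneq j.+1 i) => [-> //|ne].
    apply: ltnW; apply: (sorted_ltn_nth ltn_trans) => //; rewrite ?inE; lia.
  rewrite ci; lia.
have : nth 0 bs i <= nth 0 bs j.
  case: (eqVneq i j) => [-> //|ne].
  apply: ltnW; apply: (sorted_ltn_nth ltn_trans) => //; rewrite ?inE; [exact: ltnW | by rewrite ltn_neqAle ne ji].
rewrite ci; lia.
Qed.

Lemma adj_chain0 z a d : (forall p, a <= p < a + d -> adj z p = adj z p.+1) ->
  adj z a = adj z (a + d).
Proof.
elim: d => [|d IH] H; first by rewrite addn0.
rewrite addnS -H; [apply: IH => p hp; apply: H; lia | lia].
Qed.

Lemma adj_chain z a b' : (forall p, a <= p < b' -> adj z p = adj z p.+1) ->
  a <= b' -> adj z a = adj z b'.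
Proof.
move=> H ab; rewrite -(subnKC ab); apply: adj_chain0 => p hp; apply: H; lia.
Qed.

Lemma homog_sym x y : homog n adj l x y -> homog n adj l y x.
Proof. by move=> H z zv n1 n2; rewrite (H z zv n2 n1). Qed.

Lemma block_homog j : j.+1 < size bs -> forall x y,
  nth 0 bs j <= x < nth 0 bs j.+1 -> nth 0 bs j <= y < nth 0 bs j.+1 -> homog n adj l x y.
Proof.
move=> js.
have lo : 1 <= nth 0 bs j by case/andP: (bs_range (mem_nth 0 (ltnW js))).
have hi : nth 0 bs j.+1 <= n.+1 by case/andP: (bs_range (mem_nth 0 js)).
have nc := bs_nocut js.
suff H : forall x y, x <= y -> nth 0 bs j <= x < nth 0 bs j.+1 ->
   nth 0 bs j <= y < nth 0 bs j.+1 -> homog n adj l x y.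
  move=> x y hx hy; case: (leqP x y) => xy; first exact: H.
  by apply: homog_sym; apply: H => //; apply: ltnW.
move=> x y xy hx hy z zv nx ny.
have /andP[z1 zn] : (1 <= z) && (z <= n) by [].
clear zv.
have xlo : nth 0 bs j <= x by case/andP: hx.
have yhi : y < nth 0 bs j.+1 by case/andP: hy.
clear hx hy.
have ncp : forall c, x < c <= y -> ~~ cut c.
  move=> c hc; apply: nc; clear -hc xlo yhi xy; lia.
have Rz : forall p, x <= p < y -> p.+1 + l <= z -> adj z p = adj z p.+1.
  move=> p hp pz.
  have p0 : 0 < p by clear -hp xlo lo; lia.
  have pn : p < n by clear -hp yhi hi; lia.
  have hp' : x < p.+1 <= y by clear -hp; lia.
  have cp := ncp p.+1 hp'.
  have : ~~ Rp p.
    apply: contra cp => rp; apply/and3P; split; [clear -p0; lia | clear -pn; lia | by rewrite /= rp].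
  rewrite /Rp p0 pn /= => hn.
  move/hasPn: hn => /(_ z); rewrite mem_iota /Rw pz /=.
  have -> : (1 <= z < 1 + n) by clear -z1 zn; lia.
  by move=> /(_ isT) /negPn /eqP.
have Lz : forall p, x <= p < y -> z + l <= p -> adj z p = adj z p.+1.
  move=> p hp pz.
  have p0 : 0 < p by clear -hp xlo lo; lia.
  have pn : p < n by clear -hp yhi hi; lia.
  have hp' : x < p.+1 <= y by clear -hp; lia.
  have cp := ncp p.+1 hp'.
  have : ~~ Lp p.
    apply: contra cp => rp; apply/and3P; split; [clear -p0; lia | clear -pn; lia | by rewrite /= rp orbT].
  rewrite /Lp p0 pn /= => hn.
  move/hasPn: hn => /(_ z); rewrite mem_iota /Lw pz /=.
  have -> : (1 <= z < 1 + n) by clear -z1 zn; lia.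
  by move=> /(_ isT) /negPn /eqP.
rewrite (sym x) (sym y).
case: (ltnP y z) => yz.
  have yzl : y + l <= z by move: ny; rewrite /in_Nl; clear -yz l1; lia.
  by apply: adj_chain => // p hp; apply: Rz => //; clear -hp yzl; lia.
case: (ltnP z x) => zx.
  have zxl : z + l <= x by move: nx; rewrite /in_Nl; clear -zx l1; lia.
  by apply: adj_chain => // p hp; apply: Lz => //; clear -hp zxl; lia.
have zxl : x + l <= z by move: nx; rewrite /in_Nl; clear -zx l1; lia.
have zyl : z + l <= y by move: ny; rewrite /in_Nl; clear -yz l1; lia.
clear nx ny.
have e1 : adj z x = adj z (z - l).
  apply: adj_chain; last by clear -zxl; lia.
  by move=> p hp; apply: Rz; clear -hp zxl zyl; lia.
have e2 : adj z (z + l) = adj z y.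
  apply: adj_chain; last by clear -zyl; lia.
  by move=> p hp; apply: Lz; clear -hp zxl zyl; lia.
rewrite e1 -e2; apply/eqP; apply/negPn/negP => ne.
set c := l * (z %/ l).+1.
have cz1 : z < c by rewrite /c mulnC; apply: ltn_ceil.
have cz2 : c <= z + l by rewrite /c mulnS addnC leq_add2r mulnC leq_trunc_div.
have dc : l %| c by rewrite /c dvdn_mulr.
clearbody c.
have nct : ~~ cut c by apply: ncp; clear -cz1 cz2 zxl zyl; lia.
have cq : Qc c.
  rewrite /Qc dc /=; apply/hasP; exists z; first by rewrite mem_iota; clear -z1 zn; lia.
  rewrite /Qw /Sp ne /=; apply/and3P; split; clear -cz1 cz2 zxl zyl yhi hi lo xlo; lia.
move/negP: nct; apply; apply/and3P; split.
- by clear -cz1 zxl lo xlo; lia.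
- by clear -cz2 zyl yhi hi; lia.
- by rewrite cq !orbT.
Qed.

Lemma count_or (T : Type) (a b : pred T) s : count (fun x => a x || b x) s <= count a s + count b s.
Proof. elim: s => //= x s IH; case: (a x); case: (b x) => /=; lia. Qed.

Lemma count_split (T : Type) (a b : pred T) s :
  count a s = count (fun x => a x && b x) s + count (fun x => a x && ~~ b x) s.
Proof. elim: s => //= x s IH; case: (a x); case: (b x) => /=; lia. Qed.

Lemma count_par (P : pred nat) s :
  count P s = size [seq p <- s | P p && (odd p == false)] + size [seq p <- s | P p && (odd p == true)].
Proof.
rewrite !size_filter addnC (count_split P odd).
congr (_ + _); apply: eq_count => p; case: (odd p); rewrite ?andbT ?andbF //.
Qed.

Lemma bs_count : (size bs).-1 <= 256 * k ^ 4.
Proof.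
have S1 : size bs <= 2 + count cut (iota 1 n.+1).
  rewrite /bs size_filter.
  have u := iota_uniq 1 n.+1.
  have A : count (fun c => c == 1) (iota 1 n.+1) <= 1.
    have E := count_uniq_mem 1 u; apply: (leq_trans (eq_leq E)); exact: leq_b1.
  have B : count (fun c => c == n.+1) (iota 1 n.+1) <= 1.
    have E := count_uniq_mem n.+1 u; apply: (leq_trans (eq_leq E)); exact: leq_b1.
  apply: (leq_trans (count_or (fun c => c == 1) (fun c => (c == n.+1) || cut c) _)).
  rewrite (_ : 2 + _ = 1 + (1 + count cut (iota 1 n.+1))) //; apply: leq_add => //.
  apply: (leq_trans (count_or (fun c => c == n.+1) cut _)); exact: leq_add.
have S2 : count cut (iota 1 n.+1) <= count Rp (iota 0 n.+1) + count Lp (iota 0 n.+1)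
     + size [seq c <- iota 1 n.+1 | Qc c].
  have -> : count Rp (iota 0 n.+1) = count (fun c => Rp c.-1) (iota 1 n.+1).
    by rewrite (iotaDl 1 0) count_map.
  have -> : count Lp (iota 0 n.+1) = count (fun c => Lp c.-1) (iota 1 n.+1).
    by rewrite (iotaDl 1 0) count_map.
  rewrite size_filter.
  apply: (@leq_trans (count (fun c => [|| Rp c.-1, Lp c.-1 | Qc c]) (iota 1 n.+1))).
    by apply: sub_count => c /and3P[].
  apply: (leq_trans (count_or _ _ _)); rewrite -addnA leq_add2l; exact: count_or.
have R1 := R_count false; have R2 := R_count true.
have L1 := L_count false; have L2 := L_count true.
have Q := Q_count.
rewrite (count_par Rp) (count_par Lp) in S2.
have hM : M = (2 * k).-1 by [].
move: R1 R2 L1 L2 Q S1 S2 hM.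
set B := M.*2 * (M * (M * M)).
move=> R1 R2 L1 L2 Q S1 S2 hM.
have : (size bs).-1 <= 1 + B * 2 * 2 + 4 * M by lia.
move=> H; apply: (leq_trans H); rewrite /B hM; clear -k1; nia.
Qed.

Lemma main_exists : exists (m : nat) (b : nat -> nat),
    m <= 256 * k ^ 4 /\ homog_block_partition n adj l m b.
Proof.
exists (size bs).-1, (fun j => nth 0 bs j); split; first exact: bs_count.
have sz := bs_size.
split; first exact: bs_head.
split; first exact: bs_last.
split.
{ move=> j jm.
  have j1 : j.+1 < size bs by move: jm sz; case: (size bs) => // s' /= a _.
  apply: (sorted_ltn_nth ltn_trans) => //; first exact: bs_sorted.
  by rewrite inE (ltnW j1). }
move=> j jm x y hx hy; apply: (@block_homog j) => //.
Qed.

End Main.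


Theorem lemma3 (k l n : nat) (adj : rel nat) :
  1 <= k -> 1 <= l -> simple_graph adj ->
  ~ type1 n adj k -> ~ type2 n adj k -> ~ type3 n adj k l ->
  exists (m : nat) (b : nat -> nat),
    m <= 256 * k ^ 4 /\ homog_block_partition n adj l m b.
Proof.
move=> k1 l1 sg h1 h2 h3.
by apply: main_exists.
Qed.
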